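(* Let $K$ be a non-pluripolar compact subset of $\mathbb{C}^n$. Then for every index $i\ge 0$, $$\inf\{\|P\|_K : P\in\mathcal P(\alpha(i))\} \;\ge\; [\tau^{-}(K)]^{|\alpha(i)|}.$$ In particular, every unweighted Chebyshev polynomial $T$ for $K$ in $\mathcal P(\alpha(i))$, i.e. every minimizer of $\|P\|_K$ over $P\in\mathcal P(\alpha(i))$, satisfies $\|T\|_K\ge[\tau^{-}(K)]^{|\alpha(i)|}$.
   Context: Monomials $z^\alpha=z_1^{\alpha_1}\cdots z_n^{\alpha_n}$, $\alpha\in\mathbb N_0^n$, are enumerated as $e_0=1,e_1,e_2,\dots$ with $e_i=z^{\alpha(i)}$. The enumeration is such that $|\alpha(i)|=\alpha_1+\dots+\alpha_n$ is non-decreasing in $i$. Among multi-indices of equal length it is ordered lexicographically: for $|\alpha|=|\beta|$, $\beta\prec\alpha$ iff for some $l$ one has $\alpha_l<\beta_l$ and $\alpha_k=\beta_k$ for all $k<l$. $\mathcal P(\alpha(i))$ denotes the set of polynomials of the form $e_i+\sum_{j<i}c_je_j$ with $c_j\in\mathbb C$. For compact $K\subset\mathbb C^n$, $\|\cdot\|_K$ denotes the sup norm on $K$. Set $t_i(K)=\inf\{\|P\|_K:P\in\mathcal P(\alpha(i))\}$ and $\tau^-(K)=\liminf_{i\to\infty} t_i(K)^{1/|\alpha(i)|}$. A compact set is non-pluripolar if it is not contained in the $-\infty$ locus of a plurisubharmonic function that is not identically $-\infty$ on a connected open neighborhood. *)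

(* Defs.v *)
From HB Require Import structures.
From mathcomp Require Import all_boot all_order all_algebra.
From mathcomp Require Import all_classical all_reals all_analysis.
From mathcomp Require Import complex.

Set Implicit Arguments.
Unset Strict Implicit.
Unset Printing Implicit Defensive.

Import Order.TTheory GRing.Theory Num.Theory.
Import numFieldNormedType.Exports.
Local Open Scope classical_set_scope.
Local Open Scope ring_scope.

(* C^n is modelled as 'I_n -> R * R (real and imaginary parts of each
   coordinate), with the product topology (= Euclidean topology of R^{2n}). *)
Notation Cn R n := ({ptws 'I_n -> (R * R)%type}) (only parsing).

Section Defs.
Variables (R : realType) (n : nat).
Local Notation C := (R[i]).

Definition toC (p : R * R) : C := Complex p.1 p.2.
Definition ofC (w : C) : R * R := (complex.Re w, complex.Im w).

Definition cmod (w : C) : R := Num.sqrt (complex.Re w ^+ 2 + complex.Im w ^+ 2).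

Definition expi (t : R) : C := Complex (cos t) (sin t).

Definition mindex := 'I_n -> nat.
Definition mdeg (a : mindex) : nat := (\sum_(k < n) a k)%N.

(* the order on multi-indices used for the enumeration:
   beta comes strictly before alpha *)
Definition glex_lt (b a : mindex) : Prop :=
  (mdeg b < mdeg a)%N \/
  (mdeg b = mdeg a /\
   exists l : 'I_n, (a l < b l)%N /\ forall k : 'I_n, (k < l)%N -> a k = b k).

Definition glex_enum (alpha : nat -> mindex) : Prop :=
  bijective alpha /\ forall i j : nat, (i < j)%N -> glex_lt (alpha i) (alpha j).

Definition monomial (a : mindex) (z : Cn R n) : C :=
  \prod_(k < n) toC (z k) ^+ a k.

Definition Ppoly (alpha : nat -> mindex) (i : nat) (c : nat -> C) (z : Cn R n) : C :=
  monomial (alpha i) z + \sum_(j < i) c j * monomial (alpha j) z.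

Definition supnorm (K : set (Cn R n)) (f : Cn R n -> C) : R :=
  sup [set cmod (f z) | z in K].

Definition tcheb (K : set (Cn R n)) (alpha : nat -> mindex) (i : nat) : R :=
  inf [set supnorm K (Ppoly alpha i c) | c in [set: nat -> C]].

Definition tau_minus (K : set (Cn R n)) (alpha : nat -> mindex) : R :=
  limn_inf (fun i => tcheb K alpha i `^ ((mdeg (alpha i))%:R^-1)).

Definition cline (a b : Cn R n) (zeta : C) : Cn R n :=
  fun k => ofC (toC (a k) + zeta * toC (b k)).

Definition psh (Omega : set (Cn R n)) (u : Cn R n -> \bar R) : Prop :=
  [/\ (forall z, Omega z -> (u z < +oo)%E),
      (forall a, Omega a -> forall c : R, (u a < c%:E)%E ->
          \forall z \near a, (u z < c%:E)%E) &
      (forall a b : Cn R n,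
          (forall zeta : C, cmod zeta <= 1 -> Omega (cline a b zeta)) ->
          (u a <= ((2 * pi)^-1)%:E *
                  \int[@lebesgue_measure R]_(t in `[0%R, (2 * pi)%R]) u (cline a b (expi t)))%E)].

Definition pluripolar (K : set (Cn R n)) : Prop :=
  exists (Omega : set (Cn R n)) (u : Cn R n -> \bar R),
    [/\ open Omega, connected Omega, K `<=` Omega & psh Omega u] /\
    (exists2 z, Omega z & u z != -oo%E) /\
    (forall z, K z -> u z = -oo%E).

End Defs.

(* Main.v *)
Require Import Defs.
From HB Require Import structures.
From mathcomp Require Import all_boot all_order all_algebra.
From mathcomp Require Import all_classical all_reals all_analysis.
From mathcomp Require Import complex.
From mathcomp Require Import ring lra.
Import Order.TTheory GRing.Theory Num.Theory.
Import numFieldNormedType.Exports.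
Local Open Scope classical_set_scope.
Local Open Scope ring_scope.

Section All.
Variables (R : realType) (n : nat).
Local Notation C := (R[i]).
Local Notation CN := ({ptws 'I_n -> (R * R)%type}).
Local Notation mi := (mindex n).

Definition madd (a b : mi) : mi := fun k => (a k + b k)%N.
Definition mzero : mi := fun _ => 0%N.
Definition mscale (m : nat) (a : mi) : mi := fun k => (m * a k)%N.

Lemma madd_comm (a b : mi) : madd a b = madd b a.
Proof. by apply: funext => k; rewrite /madd addnC. Qed.

Lemma mdeg_add (a b : mi) : mdeg (madd a b) = (mdeg a + mdeg b)%N.
Proof. by rewrite /mdeg /madd big_split. Qed.

Lemma mdeg_scale m (a : mi) : mdeg (mscale m a) = (m * mdeg a)%N.
Proof. by rewrite /mdeg /mscale big_distrr. Qed.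

Lemma glex_lt_irr (a : mi) : ~ glex_lt a a.
Proof.
case=> [|[_ [l [H _]]]]; first by rewrite ltnn.
by rewrite ltnn in H.
Qed.

Lemma glex_lt_deg (a b : mi) : glex_lt a b -> (mdeg a <= mdeg b)%N.
Proof. by case=> [/ltnW|[-> _]]. Qed.

Lemma glex_lt_trans (a b c : mi) : glex_lt a b -> glex_lt b c -> glex_lt a c.
Proof.
move=> H1 H2.
case: H1 => [d1|[e1 [l [l1 a1]]]]; case: H2 => [d2|[e2 [l' [l2 a2]]]].
- by left; apply: ltn_trans d2.
- by left; rewrite -e2.
- by left; rewrite e1.
- right; split; first by rewrite e1.
  case: (ltngtP l l') => hl.
  + exists l; split; first by rewrite a2.
    by move=> k hk; rewrite a2 ?a1 //; apply: ltn_trans hl.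
  + exists l'; split; first by rewrite -a1.
    by move=> k hk; rewrite a2 ?a1 //; apply: ltn_trans hl.
  + have ll : l = l' by apply: val_inj.
    subst l'; exists l; split; first by apply: ltn_trans l1.
    by move=> k hk; rewrite a2 ?a1.
Qed.

Lemma glex_lt_addr (a b c : mi) : glex_lt a b -> glex_lt (madd a c) (madd b c).
Proof.
case=> [d|[e [l [l1 a1]]]].
- by left; rewrite !mdeg_add ltn_add2r.
- right; split; first by rewrite !mdeg_add e.
  exists l; split; first by rewrite /madd ltn_add2r.
  by move=> k hk; rewrite /madd a1.
Qed.

Arguments glex_lt_trans {a b c}.
Arguments glex_lt_addr {a b} c.

Lemma monomial_add (a b : mi) (z : CN) :
  monomial (madd a b) z = monomial a z * monomial b z.
Proof. by rewrite /monomial -big_split /=; apply: eq_bigr => k _; rewrite exprD. Qed.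

Lemma monomial_zero (z : CN) : monomial mzero z = 1.
Proof. by rewrite /monomial big1. Qed.

Inductive low (b : mi) : (CN -> C) -> Prop :=
| low0 : low b (fun _ => 0)
| lowS a c f : glex_lt a b -> low b f -> low b (fun z => c * monomial a z + f z).
Arguments low0 {b}.
Arguments lowS {b a} c {f}.

Lemma low_ext {b : mi} {f g} : low b f -> (forall z, f z = g z) -> low b g.
Proof. by move=> H E; have -> : g = f by apply: funext => z; rewrite E. Qed.

Lemma low_add (b : mi) f g : low b f -> low b g -> low b (fun z => f z + g z).
Proof.
move=> Hf Hg; elim: Hf => [|a c f' ha _ IH].
  by apply: low_ext Hg _ => z; rewrite add0r.
by apply: (low_ext (lowS c ha IH)) => z /=; rewrite addrA.
Qed.
Arguments low_add {b f g}.

Lemma low_scale (b : mi) f d : low b f -> low b (fun z => d * f z).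
Proof.
elim=> [|a c f' ha _ IH]; first by apply: low_ext low0 _ => z; rewrite mulr0.
by apply: low_ext (lowS (d * c) ha IH) _ => z; rewrite mulrDr mulrA.
Qed.
Arguments low_scale {b f} d.

Lemma low_mono (b b' : mi) f : low b f -> glex_lt b b' -> low b' f.
Proof.
move=> H hb; elim: H => [|a c f' ha _ IH]; first exact: low0.
exact: (lowS c (glex_lt_trans ha hb) IH).
Qed.
Arguments low_mono {b b' f}.

Lemma low_mulmono (b g : mi) f : low b f -> low (madd b g) (fun z => monomial g z * f z).
Proof.
elim=> [|a c f' ha _ IH]; first by apply: low_ext low0 _ => z; rewrite mulr0.
apply: low_ext (lowS c (glex_lt_addr g ha) IH) _ => z.
by rewrite monomial_add; ring.
Qed.
Arguments low_mulmono {b} g {f}.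

Lemma low_mul (b g : mi) f h : low b f -> low g h -> low (madd b g) (fun z => f z * h z).
Proof.
move=> Hf Hh; elim: Hf => [|a c f' ha _ IH].
  by apply: low_ext low0 _ => z; rewrite mul0r.
have H1 := low_mulmono a Hh.
have H2 : glex_lt (madd g a) (madd b g) by rewrite madd_comm; apply: glex_lt_addr.
apply: low_ext (low_add (low_scale c (low_mono H1 H2)) IH) _ => z.
by rewrite mulrDl mulrA.
Qed.
Arguments low_mul {b g f h}.

Definition lead (b : mi) (f : CN -> C) :=
  exists g, low b g /\ f = (fun z => monomial b z + g z).

Lemma lead_mul (b g : mi) f h : lead b f -> lead g h -> lead (madd b g) (fun z => f z * h z).
Proof.
move=> [F [HF ->]] [H [HH ->]].
have H1 := low_mulmono b HH; rewrite madd_comm in H1.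
have H2 := low_mulmono g HF.
have H3 := low_mul HF HH.
exists (fun z => monomial b z * H z + (monomial g z * F z + F z * H z)); split.
  exact: low_add H1 (low_add H2 H3).
apply: funext => z; rewrite monomial_add.
by rewrite mulrDl !mulrDr; rewrite [F z * monomial g z]mulrC !addrA.
Qed.
Arguments lead_mul {b g f h}.

Lemma lead_pow (b : mi) f m : lead b f -> lead (mscale m b) (fun z => f z ^+ m).
Proof.
move=> H; elim: m => [|m IH].
  have -> : mscale 0 b = mzero by apply: funext.
  exists (fun _ => 0); split; first exact: low0.
  by apply: funext => z; rewrite monomial_zero addr0.
have -> : mscale m.+1 b = madd (mscale m b) b.
  by apply: funext => k; rewrite /madd /mscale mulSnr.
have -> : (fun z => f z ^+ m.+1) = (fun z => f z ^+ m * f z).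
  by apply: funext => z; rewrite exprSr.
exact: lead_mul IH H.
Qed.
Arguments lead_pow {b f} m.


Lemma enum_lt (alpha : nat -> mi) j m : glex_enum alpha ->
  glex_lt (alpha j) (alpha m) -> (j < m)%N.
Proof.
move=> [_ inc] h; case: (ltngtP j m) => // hjm.
  by case: (glex_lt_irr _ (glex_lt_trans h (inc _ _ hjm))).
by subst; case: (glex_lt_irr _ h).
Qed.

Lemma low_Ppoly (alpha : nat -> mi) m g : glex_enum alpha -> low (alpha m) g ->
  exists c : nat -> C, g = fun z => \sum_(j < m) c j * monomial (alpha j) z.
Proof.
move=> ge H; elim: H => [|a c0 f ha _ [c ->]].
  by exists (fun _ => 0); apply: funext => z; rewrite big1 // => j _; rewrite mul0r.
have [bij _] := ge; have [ainv K1 K2] := bij.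
set j := ainv a.
have ea : a = alpha j by rewrite /j K2.
have jm : (j < m)%N by apply: (@enum_lt alpha j m ge); rewrite -ea.
exists (fun t => c t + (if t == j then c0 else 0)); apply: funext => z.
rewrite [RHS](eq_bigr (fun t : 'I_m => c t * monomial (alpha t) z +
   (if (t == j :> nat) then c0 else 0) * monomial (alpha t) z)); last first.
  by move=> t _; rewrite mulrDl.
rewrite big_split /= [RHS]addrC; congr (_ + _).
rewrite [RHS](eq_bigr (fun t : 'I_m => if (t == j :> nat) then c0 * monomial (alpha t) z else 0)).
  by rewrite -big_mkcond (big_ord1_eq _ (fun k => c0 * monomial (alpha k) z)) jm ea.
by move=> t _; case: eqP => _; rewrite ?mul0r.
Qed.

Lemma lead_Ppoly (alpha : nat -> mi) m f : glex_enum alpha -> lead (alpha m) f ->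
  exists c, f = Ppoly alpha m c.
Proof.
move=> ge [g [Hg ->]]; have [c ->] := @low_Ppoly alpha m g ge Hg.
by exists c.
Qed.


Lemma cmodE (w : C) : cmod w = Normc.normc w.
Proof. by case: w. Qed.

Lemma cmod_ge0 (w : C) : 0 <= cmod w.
Proof. exact: sqrtr_ge0. Qed.

Lemma cmodM (w1 w2 : C) : cmod (w1 * w2) = cmod w1 * cmod w2.
Proof. by rewrite !cmodE Normc.normcM. Qed.

Lemma cmodD (w1 w2 : C) : cmod (w1 + w2) <= cmod w1 + cmod w2.
Proof. by rewrite !cmodE; exact: le_normcD. Qed.

Lemma cmodX (w : C) k : cmod (w ^+ k) = cmod w ^+ k.
Proof.
elim: k => [|k IH]; first by rewrite !expr0 cmodE Normc.normc1.
by rewrite !exprS cmodM IH.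
Qed.

Lemma cmod1 : cmod (1 : C) = 1.
Proof. by rewrite cmodE Normc.normc1. Qed.

Lemma cmod_toC (p : R * R) : cmod (toC p) <= `|p.1| + `|p.2|.
Proof.
rewrite /cmod /toC /=.
have h : `|p.1| + `|p.2| = Num.sqrt ((`|p.1| + `|p.2|) ^+ 2).
  by rewrite sqrtr_sqr [RHS]ger0_norm //; apply: addr_ge0.
rewrite [X in _ <= X]h ler_sqrt ?sqr_ge0 //.
have h1 : `|p.1| ^+ 2 = p.1 ^+ 2 by rewrite real_normK ?num_real.
have h2 : `|p.2| ^+ 2 = p.2 ^+ 2 by rewrite real_normK ?num_real.
have h3 : 0 <= `|p.1| * `|p.2| by rewrite mulr_ge0.
rewrite sqrrD h1 h2; lra.
Qed.


Lemma cont_bound (K : set CN) (g : CN -> R) : continuous g -> compact K ->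
  exists M, 0 <= M /\ forall z, K z -> `|g z| <= M.
Proof.
move=> gc Kc.
have cK : compact (g @` K) by apply: continuous_compact => //; exact: continuous_subspaceT.
have := compact_bounded cK.
move=> [M [_ HM]].
exists (`|M| + 1); split; first by apply: addr_ge0.
move=> z Kz; apply: (HM (`|M| + 1)); last by exists z.
by rewrite (le_lt_trans (ler_norm M)) // ltrDl.
Qed.

Lemma coord_cont (k : 'I_n) : continuous (fun z : CN => (z k).1) /\
   continuous (fun z : CN => (z k).2).
Proof.
split => z.
  apply: (@continuous_comp _ _ _ (fun z : CN => z k) fst); first exact: proj_continuous.
  exact: cvg_fst.
apply: (@continuous_comp _ _ _ (fun z : CN => z k) snd); first exact: proj_continuous.
exact: cvg_snd.
Qed.


Definition bnd (K : set CN) (f : CN -> C) :=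
  exists M, 0 <= M /\ forall z, K z -> cmod (f z) <= M.

Lemma bnd_const K (c : C) : bnd K (fun _ => c).
Proof. by exists (cmod c); split; [exact: cmod_ge0|]. Qed.

Lemma bnd_add K f g : bnd K f -> bnd K g -> bnd K (fun z => f z + g z).
Proof.
move=> [M [M0 HM]] [N [N0 HN]]; exists (M + N); split; first exact: addr_ge0.
move=> z Kz; apply: le_trans (cmodD _ _) _; exact: lerD (HM _ Kz) (HN _ Kz).
Qed.

Lemma bnd_mul K f g : bnd K f -> bnd K g -> bnd K (fun z => f z * g z).
Proof.
move=> [M [M0 HM]] [N [N0 HN]]; exists (M * N); split; first exact: mulr_ge0.
move=> z Kz; rewrite cmodM; apply: ler_pM => //; try exact: cmod_ge0.
  exact: HM. exact: HN.
Qed.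

Lemma bnd_pow K f k : bnd K f -> bnd K (fun z => f z ^+ k).
Proof.
move=> Hf; elim: k => [|k IH].
  by apply: (@bnd_const K 1) .
have -> : (fun z => f z ^+ k.+1) = (fun z => f z ^+ k * f z).
  by apply: funext => z; rewrite exprSr.
exact: bnd_mul.
Qed.

Lemma bnd_sum K m (F : nat -> CN -> C) : (forall j, bnd K (F j)) ->
  bnd K (fun z => \sum_(j < m) F j z).
Proof.
move=> HF; elim: m => [|m IH].
  have -> : (fun z => \sum_(j < 0) F j z) = (fun _ => 0) by apply: funext => z; rewrite big_ord0.
  exact: bnd_const.
have -> : (fun z => \sum_(j < m.+1) F j z) = (fun z => \sum_(j < m) F j z + F m z).
  by apply: funext => z; rewrite big_ord_recr.
exact: bnd_add.
Qed.

Lemma bnd_prod K m (F : 'I_m -> CN -> C) : (forall j, bnd K (F j)) ->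
  bnd K (fun z => \prod_(j < m) F j z).
Proof.
elim: m F => [|m IH] F HF.
  have -> : (fun z => \prod_(j < 0) F j z) = (fun _ => 1) by apply: funext => z; rewrite big_ord0.
  exact: bnd_const.
have -> : (fun z => \prod_(j < m.+1) F j z) =
   (fun z => \prod_(j < m) F (widen_ord (leqnSn m) j) z * F ord_max z).
  by apply: funext => z; rewrite big_ord_recr.
apply: bnd_mul => //; exact: IH.
Qed.

Lemma bnd_coord K (k : 'I_n) : compact K -> bnd K (fun z => toC (z k)).
Proof.
move=> Kc; have [c1 c2] := coord_cont k.
have [M1 [M10 H1]] := @cont_bound K _ c1 Kc.
have [M2 [M20 H2]] := @cont_bound K _ c2 Kc.
exists (M1 + M2); split; first exact: addr_ge0.
move=> z Kz; apply: le_trans (cmod_toC _) _; exact: lerD (H1 _ Kz) (H2 _ Kz).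
Qed.

Lemma bnd_monomial K (a : mi) : compact K -> bnd K (monomial a).
Proof.
move=> Kc; apply: bnd_prod => k; apply: bnd_pow; exact: bnd_coord.
Qed.

Lemma bnd_Ppoly K (alpha : nat -> mi) i c : compact K -> bnd K (Ppoly alpha i c).
Proof.
move=> Kc; apply: bnd_add; first exact: bnd_monomial.
apply: (@bnd_sum K i (fun j z => c j * monomial (alpha j) z)) => j.
apply: bnd_mul; [exact: bnd_const | exact: bnd_monomial].
Qed.


Lemma supnorm_ub (K : set CN) (f : CN -> C) z : bnd K f -> K z -> cmod (f z) <= supnorm K f.
Proof.
move=> [M [_ HM]] Kz; apply: ub_le_sup; last by exists z.
by exists M => _ [w Kw <-]; exact: HM.
Qed.
Arguments supnorm_ub {K f z}.

Lemma supnorm_le (K : set CN) (f : CN -> C) M : K !=set0 -> (forall z, K z -> cmod (f z) <= M) ->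
  supnorm K f <= M.
Proof.
move=> [z Kz] HM; apply: ge_sup; first by exists (cmod (f z)), z.
by move=> _ [w Kw <-]; exact: HM.
Qed.

Lemma supnorm_ge0 (K : set CN) (f : CN -> C) : K !=set0 -> bnd K f -> 0 <= supnorm K f.
Proof.
move=> [z Kz] Hf; apply: le_trans (supnorm_ub Hf Kz); exact: cmod_ge0.
Qed.

Lemma tcheb_le (K : set CN) (alpha : nat -> mi) i c : K !=set0 -> compact K ->
  tcheb K alpha i <= supnorm K (Ppoly alpha i c).
Proof.
move=> K0 Kc; apply: ge_inf; last by exists c.
exists 0 => _ [c' _ <-]; apply: supnorm_ge0 => //; exact: bnd_Ppoly.
Qed.

Lemma tcheb_ge0 (K : set CN) (alpha : nat -> mi) i : K !=set0 -> compact K ->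
  0 <= tcheb K alpha i.
Proof.
move=> K0 Kc; apply: lb_le_inf; first by exists (supnorm K (Ppoly alpha i (fun=> 0))), (fun=> 0).
move=> _ [c' _ <-]; apply: supnorm_ge0 => //; exact: bnd_Ppoly.
Qed.

Lemma liminf_le (u : nat -> R) x : (forall m, 0 <= u m) ->
  (forall N, exists2 j, (N <= j)%N & u j <= x) ->
  0 <= limn_inf u /\ limn_inf u <= x.
Proof.
move=> u0 Hx.
have lb : has_lbound (range u) by exists 0 => _ [m _ <-].
have nd := nondecreasing_infs lb.
have hinf N : infs u N <= x.
  have [j Nj ujx] := Hx N.
  apply: le_trans ujx; rewrite /infs /=; apply: ge_inf; last by exists j.
  by exists 0 => _ [m _ <-].
have hinf0 N : 0 <= infs u N.
  rewrite /infs /=; apply: lb_le_inf; first by exists (u N); exists N => /=.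
  by move=> _ [m _ <-].
have ub : has_ubound (range (infs u)) by exists x => _ [m _ <-].
have cv := nondecreasing_is_cvgn nd ub.
split; [apply: limr_ge cv _ | apply: limr_le cv _]; exact: nearW.
Qed.


Definition scl (z : CN) (t : R) : CN := fun k => (t * (z k).1, t * (z k).2).

Lemma scl_cont (z : CN) : continuous (scl z).
Proof.
move=> t; apply/cvg_sup => k.
have H : continuous ((fun f : 'I_n -> (R * R)%type => f k) \o scl z).
  move=> s; rewrite /scl /comp /=.
  apply: (@cvg_pair _ _ _ (nbhs s) (nbhs (s * (z k).1)) (nbhs (s * (z k).2))).
    by apply: cvgMl; exact: cvg_id.
  by apply: cvgMl; exact: cvg_id.
exact: (@continuous_comp_initial _ _ _ (fun f : 'I_n -> (R * R)%type => f k) (scl z) H t).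
Qed.

Lemma connectedT_CN : connected (@setT CN).
Proof.
have -> : (@setT CN) = \bigcup_(z in setT) (scl z @` `[0, 1]).
  apply/seteqP; split => // z _; exists z => //; exists 1.
    by rewrite /= in_itv /= lexx ler01.
  by apply: funext => k; rewrite /scl !mul1r; case: (z k).
apply: bigcup_connected.
  exists (fun _ => (0, 0)) => z _; exists 0; first by rewrite /= in_itv /= lexx ler01.
  by apply: funext => k; rewrite /scl !mul0r.
move=> z _; apply: connected_continuous_connected; first exact: segment_connected.
exact/continuous_subspaceT/scl_cont.
Qed.


Lemma nonpp_nonempty (K : set CN) : ~ pluripolar K -> K !=set0.
Proof.
move=> HK; case: (pselect (K !=set0)) => // h; exfalso; apply: HK.
exists setT, (fun _ => 0%E); split.
  split => //; first exact: openT; first exact: connectedT_CN.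
  split.
  - by move=> z _; exact: ltry.
  - move=> a _ c c0; apply: (@filterS _ _ (nbhs_filter a) setT) => //; exact: filterT.
  - move=> a b _.
    rewrite (_ : (fun t => _) = cst 0%E); last by apply: funext.
    by rewrite integral0 mule0.
split.
  by exists (fun _ => (0, 0)) => //.
by move=> z Kz; exfalso; apply: h; exists z.
Qed.


Lemma lead_self (alpha : nat -> mi) i c : glex_enum alpha ->
  lead (alpha i) (Ppoly alpha i c).
Proof.
move=> [_ inc].
have H : forall m, (m <= i)%N ->
    low (alpha i) (fun z => \sum_(j < m) c j * monomial (alpha j) z).
  elim=> [|m IH] hm.
    by apply: (low_ext low0) => z; rewrite big_ord0.
  have hmi : (m < i)%N by [].
  have L1 := IH (ltnW hm).
  have L2 : low (alpha i) (fun z => c m * monomial (alpha m) z + 0).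
    exact: (lowS (c m) (inc _ _ hmi) low0).
  apply: (low_ext (low_add L1 L2)) => z.
  by rewrite big_ord_recr /= addr0.
by exists (fun z => \sum_(j < i) c j * monomial (alpha j) z); split; [exact: H|].
Qed.

Lemma mdeg_comp (a : mi) k : (a k <= mdeg a)%N.
Proof. by rewrite /mdeg (bigD1 k) //= leq_addr. Qed.

Lemma mdeg0_index (alpha : nat -> mi) i : glex_enum alpha ->
  mdeg (alpha i) = 0%N -> i = 0%N.
Proof.
move=> [_ inc] h; case: i h => // i h; exfalso.
have := inc 0%N i.+1 isT; case=> [|[e [l [hl _]]]]; first by rewrite h.
have := mdeg_comp (alpha i.+1) l; rewrite h leqn0 => /eqP h0.
have := mdeg_comp (alpha 0%N) l; rewrite e h leqn0 => /eqP h1.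
by rewrite h0 h1 in hl.
Qed.

Lemma case_deg0 (K : set CN) (alpha : nat -> mi) i : glex_enum alpha ->
  K !=set0 -> compact K -> mdeg (alpha i) = 0%N -> 1 <= tcheb K alpha i.
Proof.
move=> ge K0 Kc h.
have i0 := mdeg0_index _ _ ge h; subst i.
have [z0 Kz0] := K0.
apply: lb_le_inf; first by exists (supnorm K (Ppoly alpha 0 (fun=> 0))), (fun=> 0).
move=> _ [c _ <-].
apply: le_trans (supnorm_ub (bnd_Ppoly _ _ _ c Kc) Kz0).
rewrite /Ppoly big_ord0 addr0 /monomial big1 ?cmod1 // => k _.
have := mdeg_comp (alpha 0%N) k; rewrite h leqn0 => /eqP ->.
by rewrite expr0.
Qed.

Lemma case_pos (K : set CN) (alpha : nat -> mi) i c : glex_enum alpha ->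
  K !=set0 -> compact K -> (0 < mdeg (alpha i))%N ->
  tau_minus K alpha ^+ mdeg (alpha i) <= supnorm K (Ppoly alpha i c).
Proof.
move=> ge K0 Kc dpos.
set d := mdeg (alpha i).
set P := Ppoly alpha i c.
set s := supnorm K P.
have bP : bnd K P by exact: bnd_Ppoly.
have s0 : 0 <= s by exact: supnorm_ge0.
have [bij inc] := ge; have [ainv K1 K2] := bij.
have key : forall N, exists2 j, (N <= j)%N &
    tcheb K alpha j `^ ((mdeg (alpha j))%:R^-1) <= s `^ (d%:R^-1).
  move=> N.
  set k := (mdeg (alpha N)).+1.
  set j := ainv (mscale k (alpha i)).
  have ej : alpha j = mscale k (alpha i) by rewrite /j K2.
  have dj : mdeg (alpha j) = (k * d)%N by rewrite ej mdeg_scale.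
  exists j.
    rewrite leqNgt; apply/negP => jN.
    have := glex_lt_deg _ _ (inc _ _ jN); rewrite dj => hle.
    have : (k <= k * d)%N by rewrite leq_pmulr.
    move=> hk; have := leq_trans hk hle; by rewrite ltnn.
  have L := lead_pow k (lead_self alpha i c ge).
  rewrite -ej in L.
  have [c' Ec'] := lead_Ppoly _ _ _ ge L.
  have ht : tcheb K alpha j <= s ^+ k.
    apply: le_trans (tcheb_le K alpha j c' K0 Kc) _.
    rewrite -Ec'; apply: supnorm_le => // z Kz.
    rewrite cmodX; apply: lerXn2r; rewrite ?nnegrE ?cmod_ge0 //.
    exact: supnorm_ub.
  have t0 : 0 <= tcheb K alpha j by exact: tcheb_ge0.
  have k0 : (0 < k)%N by [].
  rewrite dj.
  have r0 : 0 <= ((k * d)%N%:R : R)^-1 by rewrite invr_ge0.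
  apply: le_trans (ge0_ler_powR r0 _ _ ht) _; rewrite ?nnegrE ?exprn_ge0 //.
  rewrite -powR_mulrn // -powRrM natrM invfM mulrA divff ?mul1r //.
  by rewrite pnatr_eq0 -lt0n.
have u0 : forall m, 0 <= tcheb K alpha m `^ ((mdeg (alpha m))%:R^-1).
  by move=> m; exact: powR_ge0.
have [tau0 tauw] := liminf_le _ _ u0 key.
rewrite /tau_minus.
apply: le_trans (lerXn2r d _ _ tauw) _; rewrite ?nnegrE ?powR_ge0 //.
rewrite -powR_mulrn ?powR_ge0 // -powRrM mulVf ?powRr1 //.
by rewrite pnatr_eq0 -lt0n.
Qed.

End All.

Theorem theorem2p1 (R : realType) (n : nat) (K : set (Cn R n))
    (alpha : nat -> mindex n) :
  glex_enum alpha -> compact K -> ~ pluripolar K ->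
  forall i : nat,
    tau_minus K alpha ^+ mdeg (alpha i) <= tcheb K alpha i /\
    (forall c : nat -> R[i],
       (forall c' : nat -> R[i],
          supnorm K (Ppoly alpha i c) <= supnorm K (Ppoly alpha i c')) ->
       tau_minus K alpha ^+ mdeg (alpha i) <= supnorm K (Ppoly alpha i c)).
Proof.
move=> ge Kc npp i.
have K0 := nonpp_nonempty R n K npp.
have first : tau_minus K alpha ^+ mdeg (alpha i) <= tcheb K alpha i.
  case: (posnP (mdeg (alpha i))) => h.
    by rewrite h expr0; exact: (case_deg0 R n K alpha i ge K0 Kc h).
  apply: lb_le_inf.
    by exists (supnorm K (Ppoly alpha i (fun=> 0))), (fun=> 0).
  move=> _ [c _ <-]; exact: (case_pos R n K alpha i c ge K0 Kc h).
split => // c _; apply: le_trans first _; exact: (tcheb_le R n K alpha i c K0 Kc).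
Qed.
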